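(* Let $A$ be a finite dimensional Hopf algebra over a field $k$, let $n$ be a positive integer, and let $M$ be a finite dimensional $A$-module for which $M\otimes M^*\simeq M^*\otimes M$ as $A$-modules. Then $M$ is projective if and only if $M^{\otimes n}$ is projective.
   Context: $M^*=\mathrm{Hom}_k(M,k)$ is the dual $A$-module with $(a\cdot f)(m)=f(S(a)m)$, $S$ the antipode; tensor products of $A$-modules are $A$-modules via the coproduct. *)

(* Defs.v *)
From HB Require Import structures.
From mathcomp Require Import all_boot all_order all_algebra.
From mathcomp Require Import mxtens.
Set Implicit Arguments. Unset Strict Implicit. Unset Printing Implicit Defensive.
Import Order.TTheory GRing.Theory Num.Theory.
Local Open Scope ring_scope.

(* A finite dimensional Hopf algebra over a field k, given by its structure
   constants with respect to a basis (e_i)_{i < hdim} of A: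
     e_i * e_j      = \sum_l hmu i j l e_l
     1              = \sum_l hunit l e_l
     Delta(e_l)     = \sum_{i,j} hdelta l i j e_i (x) e_j
     eps(e_l)       = heps l
     S(e_l)         = \sum_j hS l j e_j                                    *)
Record hopf_data (k : fieldType) := HopfData {
  hdim : nat;
  hmu : 'I_hdim -> 'I_hdim -> 'I_hdim -> k;
  hunit : 'I_hdim -> k;
  hdelta : 'I_hdim -> 'I_hdim -> 'I_hdim -> k;
  heps : 'I_hdim -> k;
  hS : 'I_hdim -> 'I_hdim -> k }.
Arguments hdim {k} h.
Arguments hmu {k} h _ _ _.
Arguments hunit {k} h _.
Arguments hdelta {k} h _ _ _.
Arguments heps {k} h _.
Arguments hS {k} h _ _.

Definition is_hopf (k : fieldType) (H : hopf_data k) : Prop :=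
  let mu := hmu H in let u := hunit H in let del := hdelta H in
  let eps := heps H in let S := hS H in
  (forall i j p q, \sum_l mu i j l * mu l p q = \sum_l mu j p l * mu i l q) /\
  (forall j q, \sum_l u l * mu l j q = (j == q)%:R) /\
  (forall j q, \sum_l u l * mu j l q = (j == q)%:R) /\
  (forall l x y z, \sum_i del l i z * del i x y = \sum_j del l x j * del j y z) /\
  (forall l j, \sum_i del l i j * eps i = (l == j)%:R) /\
  (forall l i, \sum_j del l i j * eps j = (l == i)%:R) /\
  (* Delta is an algebra morphism *)
  (forall i j x y, \sum_l mu i j l * del l x y =
     \sum_a \sum_b \sum_c \sum_d del i a b * del j c d * mu a c x * mu b d y) /\
  (forall x y, \sum_l u l * del l x y = u x * u y) /\
  (forall i j, \sum_l mu i j l * eps l = eps i * eps j) /\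
  (\sum_l u l * eps l = 1) /\
  (* antipode *)
  (forall l x, \sum_a \sum_b \sum_c del l a b * S a c * mu c b x = eps l * u x) /\
  (forall l x, \sum_a \sum_b \sum_c del l a b * S b c * mu a c x = eps l * u x).

(* A finite dimensional A-module: a space k^mdim (column vectors) with the
   action of each basis element e_i given by the matrix mact i. *)
Record fdmod (k : fieldType) (H : hopf_data k) := FDMod {
  mdim : nat;
  mact : 'I_(hdim H) -> 'M[k]_mdim }.
Arguments mdim {k H} f.
Arguments mact {k H} f _.

Definition is_module (k : fieldType) (H : hopf_data k) (M : fdmod H) : Prop :=
  (forall i j, mact M i *m mact M j = \sum_l hmu H i j l *: mact M l) /\
  (\sum_l hunit H l *: mact M l = 1%:M).

Definition tens (k : fieldType) (H : hopf_data k) (M N : fdmod H) : fdmod H :=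
  @FDMod k H (mdim M * mdim N)
    (fun l => \sum_i \sum_j hdelta H l i j *: (mact M i *t mact N j)).

(* Dual module: (a.f)(m) = f(S(a) m); in the dual basis e_l acts by the
   transpose of the matrix of S(e_l). *)
Definition dual (k : fieldType) (H : hopf_data k) (M : fdmod H) : fdmod H :=
  @FDMod k H (mdim M) (fun l => (\sum_j hS H l j *: mact M j)^T).

Definition triv (k : fieldType) (H : hopf_data k) : fdmod H :=
  @FDMod k H 1 (fun l => (heps H l)%:M).

Fixpoint tpow (k : fieldType) (H : hopf_data k) (M : fdmod H) (n : nat) : fdmod H :=
  match n with
  | 0 => triv H
  | 1 => M
  | n'.+1 => tens (tpow M n') M
  end.

Definition is_hom (k : fieldType) (H : hopf_data k) (M N : fdmod H)
  (F : 'M[k]_(mdim N, mdim M)) : Prop :=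
  forall i, F *m mact M i = mact N i *m F.

Definition mod_iso (k : fieldType) (H : hopf_data k) (M N : fdmod H) : Prop :=
  exists (F : 'M[k]_(mdim N, mdim M)) (G : 'M[k]_(mdim M, mdim N)),
    [/\ is_hom F, is_hom G, F *m G = 1%:M & G *m F = 1%:M].

(* M is projective: every surjective A-module map onto M splits. *)
Definition projective (k : fieldType) (H : hopf_data k) (M : fdmod H) : Prop :=
  forall (N : fdmod H), is_module N ->
  forall (F : 'M[k]_(mdim M, mdim N)), is_hom F -> \rank F = mdim M ->
  exists G : 'M[k]_(mdim N, mdim M), is_hom G /\ F *m G = 1%:M.

(* Main.v *)
Require Import Defs.
From HB Require Import structures.
From mathcomp Require Import all_boot all_order all_algebra.
From mathcomp Require Import mxtens ring.
Set Implicit Arguments. Unset Strict Implicit. Unset Printing Implicit Defensive.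
Import Order.TTheory GRing.Theory Num.Theory.
Local Open Scope ring_scope.

Section MxHelpers.
Variable k : fieldType.

Lemma tensmxDl m n p q (A1 A2 : 'M[k]_(m,n)) (B : 'M[k]_(p,q)) :
  (A1 + A2) *t B = A1 *t B + A2 *t B.
Proof. by apply/matrixP=> i j; rewrite !mxE mulrDl. Qed.
Lemma tensmxDr m n p q (A : 'M[k]_(m,n)) (B1 B2 : 'M[k]_(p,q)) :
  A *t (B1 + B2) = A *t B1 + A *t B2.
Proof. by apply/matrixP=> i j; rewrite !mxE mulrDr. Qed.
Lemma tensmxZl m n p q a (A : 'M[k]_(m,n)) (B : 'M[k]_(p,q)) :
  (a *: A) *t B = a *: (A *t B).
Proof. by apply/matrixP=> i j; rewrite !mxE mulrA. Qed.
Lemma tensmxZr m n p q a (A : 'M[k]_(m,n)) (B : 'M[k]_(p,q)) :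
  A *t (a *: B) = a *: (A *t B).
Proof. by apply/matrixP=> i j; rewrite !mxE mulrCA. Qed.
Lemma tensmx_suml m n p q I (r : seq I) (P : pred I) (F : I -> 'M[k]_(m,n)) (B : 'M[k]_(p,q)) :
  (\sum_(i <- r | P i) F i) *t B = \sum_(i <- r | P i) (F i *t B).
Proof. exact: (big_morph (fun A => A *t B) (fun x y => tensmxDl x y B) (tens0mx B)). Qed.
Lemma tensmx_sumr m n p q I (r : seq I) (P : pred I) (A : 'M[k]_(m,n)) (F : I -> 'M[k]_(p,q)) :
  A *t (\sum_(i <- r | P i) F i) = \sum_(i <- r | P i) (A *t F i).
Proof. exact: (big_morph (fun B => A *t B) (fun x y => tensmxDr A x y) (tensmx0 A)). Qed.

Lemma tens11 m n : (1%:M : 'M[k]_m) *t (1%:M : 'M[k]_n) = 1%:M.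
Proof.
apply/matrixP=> i j.
case: (mxtens_indexP i)=> i1 i2; case: (mxtens_indexP j)=> j1 j2.
rewrite tensmxE !mxE -natrM mulnb; congr (_%:R); congr nat_of_bool.
apply/idP/idP.
  by case/andP=> /eqP-> /eqP->.
by move/eqP/(congr1 (@mxtens_unindex m n)); rewrite !mxtens_indexK => -[-> ->]; rewrite !eqxx.
Qed.

Lemma tensA m1 m2 m3 n1 n2 n3 (A : 'M[k]_(m1,n1)) (B : 'M[k]_(m2,n2)) (C : 'M[k]_(m3,n3)) :
  (A *t B) *t C = castmx (mulnA m1 m2 m3, mulnA n1 n2 n3) (A *t (B *t C)).
Proof.
apply/matrixP=> i j.
case: (mxtens_indexP i)=> i12 i3; case: (mxtens_indexP i12)=> i1 i2.
case: (mxtens_indexP j)=> j12 j3; case: (mxtens_indexP j12)=> j1 j2.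
rewrite castmxE /=.
have -> : cast_ord (esym (mulnA m1 m2 m3)) (mxtens_index (mxtens_index (i1, i2), i3))
   = mxtens_index (i1, mxtens_index (i2, i3)).
  by apply: val_inj => /=; rewrite mulnDl -mulnA addnA.
have -> : cast_ord (esym (mulnA n1 n2 n3)) (mxtens_index (mxtens_index (j1, j2), j3))
   = mxtens_index (j1, mxtens_index (j2, j3)).
  by apply: val_inj => /=; rewrite mulnDl -mulnA addnA.
by rewrite !tensmxE mulrA.
Qed.

Lemma castmx_sum m n m' n' (e1 : m = m') (e2 : n = n') I (r : seq I) (P : pred I) (F : I -> 'M[k]_(m,n)) :
  castmx (e1, e2) (\sum_(i <- r | P i) F i) = \sum_(i <- r | P i) castmx (e1, e2) (F i).
Proof. by case: m' / e1; case: n' / e2; rewrite castmx_id; apply: eq_bigr => i _; rewrite castmx_id. Qed.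
Lemma castmxZ m n m' n' (e1 : m = m') (e2 : n = n') a (A : 'M[k]_(m,n)) :
  castmx (e1, e2) (a *: A) = a *: castmx (e1, e2) A.
Proof. by case: m' / e1; case: n' / e2; rewrite !castmx_id. Qed.

Definition cmx a b (e : a = b) : 'M[k]_(b, a) := castmx (e, erefl a) 1%:M.
Definition cmx' a b (e : a = b) : 'M[k]_(a, b) := castmx (erefl a, e) 1%:M.
Lemma cmxK a b (e : a = b) : cmx' e *m cmx e = 1%:M.
Proof. by case: b / e; rewrite /cmx /cmx' !castmx_id mulmx1. Qed.
Lemma cmxK' a b (e : a = b) : cmx e *m cmx' e = 1%:M.
Proof. by case: b / e; rewrite /cmx /cmx' !castmx_id mulmx1. Qed.
Lemma cmx_conj a b (e : a = b) (Y : 'M[k]_b) :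
  cmx e *m castmx (esym e, esym e) Y = Y *m cmx e.
Proof. by case: b / e in Y *; rewrite /cmx !castmx_id mulmx1 mul1mx. Qed.
Lemma cmx'_conj a b (e : a = b) (Y : 'M[k]_b) :
  cmx' e *m Y = castmx (esym e, esym e) Y *m cmx' e.
Proof. by case: b / e in Y *; rewrite /cmx' !castmx_id mulmx1 mul1mx. Qed.

End MxHelpers.
Arguments cmx {k a b} e.
Arguments cmx' {k a b} e.

Section SumHelpers.
Variables (k : fieldType) (V : lmodType k) (I : finType).

Lemma pull1 (G : I -> I -> I -> V) :
  \sum_a \sum_x \sum_y G a x y = \sum_x \sum_y \sum_a G a x y.
Proof. by rewrite exchange_big; apply: eq_bigr => x _; rewrite exchange_big. Qed.
Lemma pull2 (G : I -> I -> I -> I -> V) :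
  \sum_a \sum_b \sum_x \sum_y G a b x y = \sum_x \sum_y \sum_a \sum_b G a b x y.
Proof.
transitivity (\sum_a \sum_x \sum_y \sum_b G a b x y); first by apply: eq_bigr => a _; exact: pull1.
exact: pull1.
Qed.
Lemma pull3 (G : I -> I -> I -> I -> I -> V) :
  \sum_a \sum_b \sum_c \sum_x \sum_y G a b c x y = \sum_x \sum_y \sum_a \sum_b \sum_c G a b c x y.
Proof.
transitivity (\sum_a \sum_x \sum_y \sum_b \sum_c G a b c x y); first by apply: eq_bigr => a _; exact: pull2.
exact: pull1.
Qed.
Lemma pull4 (G : I -> I -> I -> I -> I -> I -> V) :
  \sum_a \sum_b \sum_c \sum_d \sum_x \sum_y G a b c d x y =
  \sum_x \sum_y \sum_a \sum_b \sum_c \sum_d G a b c d x y.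
Proof.
transitivity (\sum_a \sum_x \sum_y \sum_b \sum_c \sum_d G a b c d x y); first by apply: eq_bigr => a _; exact: pull3.
exact: pull1.
Qed.

Lemma scaler_suml2 (f : I -> I -> k) (v : V) :
  (\sum_a \sum_b f a b) *: v = \sum_a \sum_b f a b *: v.
Proof. by rewrite scaler_suml; apply: eq_bigr => a _; rewrite scaler_suml. Qed.
Lemma scaler_suml3 (f : I -> I -> I -> k) (v : V) :
  (\sum_a \sum_b \sum_c f a b c) *: v = \sum_a \sum_b \sum_c f a b c *: v.
Proof. by rewrite scaler_suml; apply: eq_bigr => a _; rewrite scaler_suml2. Qed.
Lemma scaler_suml4 (f : I -> I -> I -> I -> k) (v : V) :
  (\sum_a \sum_b \sum_c \sum_d f a b c d) *: v = \sum_a \sum_b \sum_c \sum_d f a b c d *: v.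
Proof. by rewrite scaler_suml; apply: eq_bigr => a _; rewrite scaler_suml3. Qed.
Lemma scale_sum2 (c : k) (f : I -> I -> k) (T : I -> I -> V) :
  c *: (\sum_x \sum_y f x y *: T x y) = \sum_x \sum_y (c * f x y) *: T x y.
Proof.
rewrite scaler_sumr; apply: eq_bigr => x _; rewrite scaler_sumr; apply: eq_bigr => y _.
by rewrite scalerA.
Qed.
Lemma scale_sum1 (c : k) (f : I -> k) (T : I -> V) :
  c *: (\sum_x f x *: T x) = \sum_x (c * f x) *: T x.
Proof. by rewrite scaler_sumr; apply: eq_bigr => x _; rewrite scalerA. Qed.

Lemma pullS2 (G : I -> I -> I -> V) :
  \sum_a \sum_b \sum_y G a b y = \sum_y \sum_a \sum_b G a b y.
Proof.
transitivity (\sum_a \sum_y \sum_b G a b y); first by apply: eq_bigr => a _; rewrite exchange_big.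
by rewrite exchange_big.
Qed.
Lemma pullS3 (G : I -> I -> I -> I -> V) :
  \sum_a \sum_b \sum_c \sum_y G a b c y = \sum_y \sum_a \sum_b \sum_c G a b c y.
Proof.
transitivity (\sum_a \sum_y \sum_b \sum_c G a b c y); first by apply: eq_bigr => a _; rewrite pullS2.
by rewrite exchange_big.
Qed.

Lemma sum_pair (J : finType) (F : J * J -> V) :
  \sum_p F p = \sum_a \sum_c F (a, c).
Proof. by rewrite pair_bigA; apply: eq_bigr => -[a c]. Qed.

Lemma pullS4 (G : I -> I -> I -> I -> I -> V) :
  \sum_a \sum_b \sum_c \sum_d \sum_y G a b c d y = \sum_y \sum_a \sum_b \sum_c \sum_d G a b c d y.
Proof.
transitivity (\sum_a \sum_y \sum_b \sum_c \sum_d G a b c d y); first by apply: eq_bigr => a _; rewrite pullS3.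
by rewrite exchange_big.
Qed.
End SumHelpers.

Section MxSumHelpers.
Variables (k : fieldType) (I : finType).

Lemma tens_sum2 m n p q (al be : I -> k) (A : I -> 'M[k]_(m,n)) (B : I -> 'M[k]_(p,q)) :
  (\sum_x al x *: A x) *t (\sum_y be y *: B y) = \sum_x \sum_y (al x * be y) *: (A x *t B y).
Proof.
rewrite tensmx_suml; apply: eq_bigr => x _; rewrite tensmx_sumr; apply: eq_bigr => y _.
by rewrite tensmxZl tensmxZr scalerA.
Qed.

Lemma sum_mul4 m n p (al be : I -> I -> k) (A : I -> I -> 'M[k]_(m,n)) (B : I -> I -> 'M[k]_(n,p)) :
  (\sum_a \sum_b al a b *: A a b) *m (\sum_c \sum_d be c d *: B c d) =
  \sum_a \sum_b \sum_c \sum_d (al a b * be c d) *: (A a b *m B c d).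
Proof.
rewrite mulmx_suml; apply: eq_bigr => a _; rewrite mulmx_suml; apply: eq_bigr => b _.
rewrite -scalemxAl mulmx_sumr scaler_sumr; apply: eq_bigr => c _.
rewrite mulmx_sumr scaler_sumr; apply: eq_bigr => d _.
by rewrite -scalemxAr scalerA.
Qed.

Lemma sum_mul2 m n p (al be : I -> k) (A : I -> 'M[k]_(m,n)) (B : I -> 'M[k]_(n,p)) :
  (\sum_a al a *: A a) *m (\sum_c be c *: B c) =
  \sum_a \sum_c (al a * be c) *: (A a *m B c).
Proof.
rewrite mulmx_suml; apply: eq_bigr => a _.
rewrite -scalemxAl mulmx_sumr scaler_sumr; apply: eq_bigr => c _.
by rewrite -scalemxAr scalerA.
Qed.
End MxSumHelpers.

Section Summand.
Variables (k : fieldType) (H : hopf_data k).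

Definition summand (P Q : fdmod H) : Prop :=
  exists (I : 'M[k]_(mdim Q, mdim P)) (Pi : 'M[k]_(mdim P, mdim Q)),
    [/\ @is_hom k H P Q I, @is_hom k H Q P Pi & Pi *m I = 1%:M].

Lemma hom_mul (M N L : fdmod H) (G : 'M[k]_(mdim L, mdim N)) (F : 'M[k]_(mdim N, mdim M)) :
  @is_hom k H N L G -> @is_hom k H M N F -> @is_hom k H M L (G *m F).
Proof. by move=> hG hF i; rewrite -mulmxA hF mulmxA hG mulmxA. Qed.

Lemma hom1 (M : fdmod H) : @is_hom k H M M 1%:M.
Proof. by move=> i; rewrite mul1mx mulmx1. Qed.

Lemma summand_refl (M : fdmod H) : summand M M.
Proof. by exists 1%:M, 1%:M; split; [exact: hom1|exact: hom1|rewrite mulmx1]. Qed.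

Lemma summand_trans (P Q R : fdmod H) : summand P Q -> summand Q R -> summand P R.
Proof.
move=> [I1 [P1 [hI1 hP1 e1]]] [I2 [P2 [hI2 hP2 e2]]].
exists (I2 *m I1), (P1 *m P2); split; try exact: hom_mul.
by rewrite mulmxA -(mulmxA P1) e2 mulmx1.
Qed.

Lemma iso_summand (M N : fdmod H) : mod_iso M N -> summand M N /\ summand N M.
Proof. by move=> [F [G [hF hG e1 e2]]]; split; [exists F, G | exists G, F]. Qed.

Lemma sum_block (I : finType) n1 n2 (c : I -> k) (A : I -> 'M[k]_n1) (B : I -> 'M[k]_n2) :
  \sum_i c i *: block_mx (A i) 0 0 (B i) = block_mx (\sum_i c i *: A i) 0 0 (\sum_i c i *: B i).
Proof.
apply: (big_rec3 (fun x y z => x = block_mx y 0 0 z)); first by rewrite block_mx0.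
by move=> i x y z _ ->; rewrite scale_block_mx add_block_mx !scaler0 !addr0.
Qed.

Lemma proj_summand (P Q : fdmod H) : is_module Q -> summand P Q -> projective Q -> projective P.
Proof.
move=> modQ [I [Pi [hI hPi ePI]]] pQ N modN F hF rF.
have /row_freeP [s Fs] : row_free F by rewrite /row_free rF.
pose N' := @FDMod k H (mdim N + mdim Q) (fun l => block_mx (mact N l) 0 0 (mact Q l)).
have modN' : is_module N'.
  case: modN => mN uN; case: modQ => mQ uQ; split.
    move=> i j /=; rewrite mulmx_block !mulmx0 !mul0mx !addr0 !add0r mN mQ.
    by rewrite sum_block.
  by rewrite /= sum_block uN uQ -scalar_mx_block.
pose F' : 'M[k]_(mdim Q, mdim N') := row_mx (I *m F) (1%:M - I *m Pi).
have hF' : @is_hom k H N' Q F'.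
  move=> l /=; rewrite mul_row_block !mulmx0 !addr0 !add0r mul_mx_row.
  congr row_mx; first by rewrite -mulmxA hF mulmxA hI mulmxA.
  by rewrite mulmxBl mulmxBr mul1mx mulmx1 -mulmxA hPi mulmxA hI mulmxA.
have rF' : \rank F' = mdim Q.
  apply/eqP; apply/row_freeP; exists (col_mx (s *m Pi) 1%:M).
  rewrite mul_row_col mulmx1 -mulmxA (mulmxA F) Fs mul1mx.
  by rewrite addrC subrK.
have [G' [hG' FG']] := pQ N' modN' F' hF' rF'.
exists (usubmx (G' *m I)); split.
  move=> l; set X := G' *m I.
  have e2 : X *m mact P l = block_mx (mact N l) 0 0 (mact Q l) *m X.
    by rewrite -mulmxA hI mulmxA (hG' l) mulmxA.
  rewrite -[X]vsubmxK mul_col_mx mul_block_col !mul0mx !addr0 add0r in e2.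
  by move/eq_col_mx: e2 => [-> _].
have e : Pi *m F' *m (G' *m I) = 1%:M by rewrite mulmxA -(mulmxA Pi) FG' mulmx1.
have e3 : Pi *m F' = row_mx F 0.
  by rewrite mul_mx_row mulmxA ePI mul1mx mulmxBr mulmx1 mulmxA ePI mul1mx subrr.
rewrite e3 -[G' *m I]vsubmxK mul_row_col mul0mx addr0 in e.
exact: e.
Qed.

End Summand.

Section Generic.
Variables (k : fieldType) (H : hopf_data k).
Local Notation del := (hdelta H).

Lemma summand_tensl (Y P Q : fdmod H) : summand P Q -> summand (tens Y P) (tens Y Q).
Proof.
move=> [I [Pi [hI hPi e]]].
exists (1%:M *t I), (1%:M *t Pi); split.
- move=> l /=; rewrite mulmx_sumr mulmx_suml; apply: eq_bigr => i _.
  rewrite mulmx_sumr mulmx_suml; apply: eq_bigr => j _.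
  by rewrite -scalemxAr -scalemxAl !tensmx_mul mul1mx mulmx1 hI.
- move=> l /=; rewrite mulmx_sumr mulmx_suml; apply: eq_bigr => i _.
  rewrite mulmx_sumr mulmx_suml; apply: eq_bigr => j _.
  by rewrite -scalemxAr -scalemxAl !tensmx_mul mul1mx mulmx1 hPi.
- by rewrite tensmx_mul mulmx1 e tens11.
Qed.

Lemma summand_tensr (Y P Q : fdmod H) : summand P Q -> summand (tens P Y) (tens Q Y).
Proof.
move=> [I [Pi [hI hPi e]]].
exists (I *t 1%:M), (Pi *t 1%:M); split.
- move=> l /=; rewrite mulmx_sumr mulmx_suml; apply: eq_bigr => i _.
  rewrite mulmx_sumr mulmx_suml; apply: eq_bigr => j _.
  by rewrite -scalemxAr -scalemxAl !tensmx_mul mul1mx mulmx1 hI.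
- move=> l /=; rewrite mulmx_sumr mulmx_suml; apply: eq_bigr => i _.
  rewrite mulmx_sumr mulmx_suml; apply: eq_bigr => j _.
  by rewrite -scalemxAr -scalemxAl !tensmx_mul mul1mx mulmx1 hPi.
- by rewrite tensmx_mul mulmx1 e tens11.
Qed.

Lemma cmx'_conj2 a b (e : b = a) (Y : 'M[k]_b) :
  cmx' e *m castmx (e, e) Y = Y *m cmx' e.
Proof. by case: a / e; rewrite /cmx' !castmx_id mulmx1 mul1mx. Qed.
Lemma cmx_conj2 a b (e : b = a) (Y : 'M[k]_b) :
  cmx e *m Y = castmx (e, e) Y *m cmx e.
Proof. by case: a / e; rewrite /cmx !castmx_id mulmx1 mul1mx. Qed.

End Generic.

Section Hopf.
Variables (k : fieldType) (H : hopf_data k) (HH : is_hopf H).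
Local Notation h := (hdim H).
Local Notation mu := (hmu H).
Local Notation u := (hunit H).
Local Notation del := (hdelta H).
Local Notation eps := (heps H).
Local Notation S := (hS H).

Lemma ax_assoc i j p q : \sum_l mu i j l * mu l p q = \sum_l mu j p l * mu i l q.
Proof. by move: HH => [X _]; apply: X. Qed.
Lemma ax_unitl j q : \sum_l u l * mu l j q = (j == q)%:R.
Proof. by move: HH => [_ [X _]]; apply: X. Qed.
Lemma ax_unitr j q : \sum_l u l * mu j l q = (j == q)%:R.
Proof. by move: HH => [_ [_ [X _]]]; apply: X. Qed.
Lemma ax_coassoc l x y z : \sum_i del l i z * del i x y = \sum_j del l x j * del j y z.
Proof. by move: HH => [_ [_ [_ [X _]]]]; apply: X. Qed.
Lemma ax_counitl l j : \sum_i del l i j * eps i = (l == j)%:R.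
Proof. by move: HH => [_ [_ [_ [_ [X _]]]]]; apply: X. Qed.
Lemma ax_counitr l i : \sum_j del l i j * eps j = (l == i)%:R.
Proof. by move: HH => [_ [_ [_ [_ [_ [X _]]]]]]; apply: X. Qed.
Lemma ax_delmul i j x y : \sum_l mu i j l * del l x y =
     \sum_a \sum_b \sum_c \sum_d del i a b * del j c d * mu a c x * mu b d y.
Proof. by move: HH => [_ [_ [_ [_ [_ [_ [X _]]]]]]]; apply: X. Qed.
Lemma ax_delunit x y : \sum_l u l * del l x y = u x * u y.
Proof. by move: HH => [_ [_ [_ [_ [_ [_ [_ [X _]]]]]]]]; apply: X. Qed.
Lemma ax_epsmul i j : \sum_l mu i j l * eps l = eps i * eps j.
Proof. by move: HH => [_ [_ [_ [_ [_ [_ [_ [_ [X _]]]]]]]]]; apply: X. Qed.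
Lemma ax_epsunit : \sum_l u l * eps l = 1.
Proof. by move: HH => [_ [_ [_ [_ [_ [_ [_ [_ [_ [X _]]]]]]]]]]. Qed.
Lemma ax_antil l x : \sum_a \sum_b \sum_c del l a b * S a c * mu c b x = eps l * u x.
Proof. by move: HH => [_ [_ [_ [_ [_ [_ [_ [_ [_ [_ [X _]]]]]]]]]]]; apply: X. Qed.
Lemma ax_antir l x : \sum_a \sum_b \sum_c del l a b * S b c * mu a c x = eps l * u x.
Proof. by move: HH => [_ [_ [_ [_ [_ [_ [_ [_ [_ [_ [_ X]]]]]]]]]]]; apply: X. Qed.

Lemma actA (M N L : fdmod H) l :
  mact (tens (tens M N) L) l =
  castmx (mulnA _ _ _, mulnA _ _ _) (mact (tens M (tens N L)) l).
Proof.
rewrite /= castmx_sum.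
transitivity (\sum_x \sum_y \sum_z (\sum_i del l i z * del i x y) *:
   ((mact M x *t mact N y) *t mact L z)).
  under eq_bigr => i _ do under eq_bigr => z _ do
    rewrite tensmx_suml scaler_sumr.
  under eq_bigr => i _ do under eq_bigr => z _ do under eq_bigr => x _ do
    rewrite tensmx_suml scaler_sumr.
  under eq_bigr => i _ do under eq_bigr => z _ do under eq_bigr => x _ do
    under eq_bigr => y _ do rewrite tensmxZl scalerA.
  under eq_bigr => i _ do rewrite exchange_big.
  rewrite exchange_big; apply: eq_bigr => x _.
  under eq_bigr => i _ do rewrite exchange_big.
  rewrite exchange_big; apply: eq_bigr => y _.
  rewrite exchange_big; apply: eq_bigr => z _.
  by rewrite scaler_suml.
apply: eq_bigr => x _; symmetry; rewrite castmx_sum.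
under eq_bigr => j _ do rewrite castmxZ tensmx_sumr castmx_sum scaler_sumr.
under eq_bigr => j _ do under eq_bigr => y _ do
   rewrite tensmx_sumr castmx_sum scaler_sumr.
under eq_bigr => j _ do under eq_bigr => y _ do under eq_bigr => z _ do
   rewrite tensmxZr castmxZ scalerA -tensA.
rewrite exchange_big; apply: eq_bigr => y _.
rewrite exchange_big; apply: eq_bigr => z _.
by rewrite -!scaler_suml ax_coassoc.
Qed.


Lemma summand_assoc1 (M N L : fdmod H) :
  summand (tens (tens M N) L) (tens M (tens N L)).
Proof.
exists (cmx' (mulnA (mdim M) (mdim N) (mdim L))), (cmx (mulnA (mdim M) (mdim N) (mdim L))).
split; last exact: cmxK'.
  by move=> l; rewrite actA cmx'_conj2.
by move=> l; rewrite cmx_conj2 -actA.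
Qed.

Lemma summand_assoc2 (M N L : fdmod H) :
  summand (tens M (tens N L)) (tens (tens M N) L).
Proof.
exists (cmx (mulnA (mdim M) (mdim N) (mdim L))), (cmx' (mulnA (mdim M) (mdim N) (mdim L))).
split; last exact: cmxK.
  by move=> l; rewrite cmx_conj2 -actA.
by move=> l; rewrite actA cmx'_conj2.
Qed.

Lemma tens_module (M N : fdmod H) : is_module M -> is_module N -> is_module (tens M N).
Proof.
move=> [mM uM] [mN uN]; split.
  move=> i j /=; rewrite sum_mul4.
  transitivity (\sum_a \sum_b \sum_c \sum_d \sum_x \sum_y
     (del i a b * del j c d * (mu a c x * mu b d y)) *: (mact M x *t mact N y)).
    apply: eq_bigr => a _; apply: eq_bigr => b _; apply: eq_bigr => c _; apply: eq_bigr => d _.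
    by rewrite tensmx_mul mM mN tens_sum2 scale_sum2.
  rewrite pull4.
  transitivity (\sum_x \sum_y (\sum_l mu i j l * del l x y) *: (mact M x *t mact N y)).
    apply: eq_bigr => x _; apply: eq_bigr => y _.
    rewrite ax_delmul scaler_suml4.
    apply: eq_bigr => a _; apply: eq_bigr => b _; apply: eq_bigr => c _; apply: eq_bigr => d _.
    by rewrite !mulrA.
  symmetry.
  transitivity (\sum_l \sum_x \sum_y (mu i j l * del l x y) *: (mact M x *t mact N y)).
    by apply: eq_bigr => l _; rewrite scale_sum2.
  rewrite exchange_big; apply: eq_bigr => x _.
  by rewrite exchange_big; apply: eq_bigr => y _; rewrite scaler_suml.
rewrite /=.
transitivity (\sum_l \sum_x \sum_y (u l * del l x y) *: (mact M x *t mact N y)).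
  by apply: eq_bigr => l _; rewrite scale_sum2.
rewrite exchange_big.
transitivity (\sum_x \sum_y (u x * u y) *: (mact M x *t mact N y)).
  apply: eq_bigr => x _; rewrite exchange_big; apply: eq_bigr => y _.
  by rewrite -scaler_suml ax_delunit.
by rewrite -tens11 -uM -uN tens_sum2.
Qed.

End Hopf.

Section Conv.
Variables (k : fieldType) (I : finType) (n : nat).
Variables (D : I -> I -> I -> k) (ep : I -> k).
Hypothesis coassD : forall p q' r' r,
  \sum_q D p q r * D q q' r' = \sum_s D p q' s * D s r' r.
Hypothesis counitL : forall p r, \sum_q D p q r * ep q = (p == r)%:R.
Hypothesis counitR : forall p q, \sum_r D p q r * ep r = (p == q)%:R.

Definition conv (F G : I -> 'M[k]_n) p := \sum_q \sum_r D p q r *: (F q *m G r).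
Definition cE p : 'M[k]_n := ep p *: 1%:M.

Lemma conv_extl F F' G p : (forall q, F q = F' q) -> conv F G p = conv F' G p.
Proof. by move=> e; apply: eq_bigr => q _; rewrite e. Qed.
Lemma conv_extr F G G' p : (forall q, G q = G' q) -> conv F G p = conv F G' p.
Proof. by move=> e; apply: eq_bigr => q _; apply: eq_bigr => r _; rewrite e. Qed.

Lemma conv_E F p : conv F cE p = F p.
Proof.
rewrite /conv /cE.
transitivity (\sum_q (\sum_r D p q r * ep r) *: F q).
  by apply: eq_bigr => q _; rewrite scaler_suml; apply: eq_bigr => r _;
     rewrite -scalemxAr mulmx1 scalerA.
under eq_bigr => q _ do rewrite counitR.
rewrite (bigD1 p) //= eqxx scale1r big1 ?addr0 // => q /negbTE.
by rewrite eq_sym => ->; rewrite scale0r.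
Qed.

Lemma E_conv F p : conv cE F p = F p.
Proof.
rewrite /conv /cE exchange_big.
transitivity (\sum_r (\sum_q D p q r * ep q) *: F r).
  by apply: eq_bigr => r _; rewrite scaler_suml; apply: eq_bigr => q _;
     rewrite -scalemxAl mul1mx scalerA mulrC.
under eq_bigr => q _ do rewrite counitL.
rewrite (bigD1 p) //= eqxx scale1r big1 ?addr0 // => q /negbTE.
by rewrite eq_sym => ->; rewrite scale0r.
Qed.

Lemma conv_assoc F G K p : conv (conv F G) K p = conv F (conv G K) p.
Proof.
rewrite /conv.
transitivity (\sum_q \sum_r \sum_q' \sum_r' (D p q r * D q q' r') *: (F q' *m G r' *m K r)).
  apply: eq_bigr => q _; apply: eq_bigr => r _.
  rewrite mulmx_suml scaler_sumr; apply: eq_bigr => q' _.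
  rewrite mulmx_suml scaler_sumr; apply: eq_bigr => r' _.
  by rewrite -scalemxAl scalerA.
rewrite pull2.
transitivity (\sum_q' \sum_r' \sum_r (\sum_q D p q r * D q q' r') *: (F q' *m G r' *m K r)).
  apply: eq_bigr => q' _; apply: eq_bigr => r' _.
  rewrite exchange_big; apply: eq_bigr => r _; by rewrite scaler_suml.
symmetry.
transitivity (\sum_q' \sum_s \sum_r' \sum_r (D p q' s * D s r' r) *: (F q' *m G r' *m K r)).
  apply: eq_bigr => q' _; apply: eq_bigr => s _.
  rewrite mulmx_sumr scaler_sumr; apply: eq_bigr => r' _.
  rewrite mulmx_sumr scaler_sumr; apply: eq_bigr => r _.
  by rewrite -scalemxAr scalerA mulmxA.
apply: eq_bigr => q' _.
rewrite pull1; apply: eq_bigr => r' _; apply: eq_bigr => r _.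
by rewrite -scaler_suml coassD.
Qed.

Lemma conv_inv_uniq L m R p :
  (forall q, conv L m q = cE q) -> (forall q, conv m R q = cE q) -> L p = R p.
Proof.
move=> hL hR.
rewrite -conv_E -(conv_extr _ _ hR) -conv_assoc (conv_extl _ _ hL).
exact: E_conv.
Qed.
End Conv.


Section Antipode.
Variables (k : fieldType) (H : hopf_data k) (HH : is_hopf H).
Local Notation h := (hdim H).
Local Notation mu := (hmu H).
Local Notation u := (hunit H).
Local Notation del := (hdelta H).
Local Notation eps := (heps H).
Local Notation S := (hS H).

Definition rS (M : fdmod H) l := \sum_j S l j *: mact M j.

Variable M : fdmod H.
Hypothesis HM : is_module M.
Local Notation r := (mact M).

Lemma actmul i j : r i *m r j = \sum_l mu i j l *: r l.
Proof. by case: HM => X _; apply: X. Qed.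
Lemma actunit : \sum_l u l *: r l = 1%:M.
Proof. by case: HM. Qed.

Lemma antiL z : \sum_a \sum_b del z a b *: (rS M a *m r b) = eps z *: 1%:M.
Proof.
transitivity (\sum_a \sum_b \sum_c \sum_y (del z a b * S a c * mu c b y) *: r y).
  apply: eq_bigr => a _; apply: eq_bigr => b _.
  rewrite /rS mulmx_suml scaler_sumr; apply: eq_bigr => c _.
  rewrite -scalemxAl actmul !scale_sum1; apply: eq_bigr => y _.
  by rewrite !mulrA.
rewrite pullS3 -actunit scaler_sumr; apply: eq_bigr => y _.
by rewrite scalerA -(ax_antil HH) scaler_suml3.
Qed.

Lemma antiR z : \sum_a \sum_b del z a b *: (r a *m rS M b) = eps z *: 1%:M.
Proof.
transitivity (\sum_a \sum_b \sum_c \sum_y (del z a b * S b c * mu a c y) *: r y).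
  apply: eq_bigr => a _; apply: eq_bigr => b _.
  rewrite /rS mulmx_sumr scaler_sumr; apply: eq_bigr => c _.
  rewrite -scalemxAr actmul !scale_sum1; apply: eq_bigr => y _.
  by rewrite !mulrA.
rewrite pullS3 -actunit scaler_sumr; apply: eq_bigr => y _.
by rewrite scalerA -(ax_antir HH) scaler_suml3.
Qed.

Lemma rS_unit : \sum_l u l *: rS M l = 1%:M.
Proof.
have e : \sum_l u l *: (eps l *: 1%:M) = 1%:M :> 'M[k]_(mdim M).
  transitivity (\sum_l (u l * eps l) *: (1%:M : 'M[k]_(mdim M))).
    by apply: eq_bigr => l _; rewrite scalerA.
  by rewrite -scaler_suml (ax_epsunit HH) scale1r.
rewrite -[RHS]e.
transitivity ((\sum_a u a *: rS M a) *m (\sum_b u b *: r b)); first by rewrite actunit mulmx1.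
rewrite sum_mul2.
transitivity (\sum_l \sum_a \sum_b (u l * del l a b) *: (rS M a *m r b)).
  symmetry; rewrite exchange_big; apply: eq_bigr => a _.
  rewrite exchange_big; apply: eq_bigr => b _.
  by rewrite -scaler_suml ax_delunit.
by apply: eq_bigr => l _; rewrite -antiL scale_sum2.
Qed.


Definition Dp (p q s : 'I_h * 'I_h) := del p.1 q.1 s.1 * del p.2 q.2 s.2.
Definition epp (p : 'I_h * 'I_h) := eps p.1 * eps p.2.

Lemma ksum_pair (F : 'I_h * 'I_h -> k) : \sum_p F p = \sum_a \sum_c F (a, c).
Proof. by rewrite pair_bigA; apply: eq_bigr => -[a c]. Qed.

Lemma coassDp p q' r' s : \sum_q Dp p q s * Dp q q' r' = \sum_t Dp p q' t * Dp t r' s.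
Proof.
rewrite !ksum_pair.
transitivity ((\sum_a del p.1 a s.1 * del a q'.1 r'.1) * (\sum_c del p.2 c s.2 * del c q'.2 r'.2)).
  rewrite big_distrlr; apply: eq_bigr => a _; apply: eq_bigr => c _.
  by rewrite /Dp /= mulrACA.
rewrite !(ax_coassoc HH) big_distrlr; apply: eq_bigr => a _; apply: eq_bigr => c _.
by rewrite /Dp /= mulrACA.
Qed.

Lemma counitLp p s : \sum_q Dp p q s * epp q = (p == s)%:R.
Proof.
rewrite ksum_pair.
transitivity ((\sum_a del p.1 a s.1 * eps a) * (\sum_c del p.2 c s.2 * eps c)).
  rewrite big_distrlr; apply: eq_bigr => a _; apply: eq_bigr => c _.
  by rewrite /Dp /epp /= mulrACA.
rewrite !(ax_counitl HH) -natrM -mulnb; case: p s => [p1 p2] [s1 s2] //.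
Qed.

Lemma counitRp p q : \sum_s Dp p q s * epp s = (p == q)%:R.
Proof.
rewrite ksum_pair.
transitivity ((\sum_a del p.1 q.1 a * eps a) * (\sum_c del p.2 q.2 c * eps c)).
  rewrite big_distrlr; apply: eq_bigr => a _; apply: eq_bigr => c _.
  by rewrite /Dp /epp /= mulrACA.
rewrite !(ax_counitr HH) -natrM -mulnb; case: p q => [p1 p2] [s1 s2] //.
Qed.

Definition Lf (p : 'I_h * 'I_h) := \sum_l mu p.1 p.2 l *: rS M l.
Definition mf (p : 'I_h * 'I_h) := r p.1 *m r p.2.
Definition Rf (p : 'I_h * 'I_h) := rS M p.2 *m rS M p.1.

Lemma convLm p : conv Dp Lf mf p = cE (mdim M) epp p.
Proof.
case: p => i j; rewrite /conv /cE /epp /=.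
transitivity (\sum_a \sum_b \sum_c \sum_e \sum_l \sum_l'
   (del i a b * del j c e * (mu a c l * mu b e l')) *: (rS M l *m r l')).
  rewrite sum_pair; apply: eq_bigr => a _.
  transitivity (\sum_c \sum_b \sum_e \sum_l \sum_l'
     (del i a b * del j c e * (mu a c l * mu b e l')) *: (rS M l *m r l')); last first.
    by rewrite exchange_big.
  apply: eq_bigr => c _; rewrite sum_pair; apply: eq_bigr => b _; apply: eq_bigr => e _.
  by rewrite /Lf /mf /Dp /= actmul sum_mul2 scale_sum2.
rewrite pull4.
transitivity (\sum_l \sum_l' (\sum_z mu i j z * del z l l') *: (rS M l *m r l')).
  apply: eq_bigr => l _; apply: eq_bigr => l' _.
  by rewrite (ax_delmul HH) scaler_suml4; do 4! (apply: eq_bigr => ? _); rewrite !mulrA.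
transitivity (\sum_z mu i j z *: (eps z *: (1%:M : 'M[k]_(mdim M)))).
  transitivity (\sum_l \sum_l' \sum_z (mu i j z * del z l l') *: (rS M l *m r l')).
    by apply: eq_bigr => l _; apply: eq_bigr => l' _; rewrite scaler_suml.
  by rewrite -pull1; apply: eq_bigr => z _; rewrite -antiL scale_sum2.
transitivity (\sum_z (mu i j z * eps z) *: (1%:M : 'M[k]_(mdim M))).
  by apply: eq_bigr => z _; rewrite scalerA.
by rewrite -scaler_suml (ax_epsmul HH).
Qed.

Lemma convmR p : conv Dp mf Rf p = cE (mdim M) epp p.
Proof.
case: p => i j; rewrite /conv /cE /epp /=.
transitivity (\sum_a \sum_b del i a b *:
   (r a *m (\sum_c \sum_e del j c e *: (r c *m rS M e)) *m rS M b)).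
  rewrite sum_pair; apply: eq_bigr => a _.
  transitivity (\sum_b \sum_c \sum_e (del i a b * del j c e) *: (r a *m r c *m (rS M e *m rS M b))).
    rewrite exchange_big sum_pair; apply: eq_bigr => b _; rewrite exchange_big; apply: eq_bigr => c _.
    by apply: eq_bigr => e _.
  apply: eq_bigr => b _.
  move: (rS M b) => B; rewrite [in RHS]mulmx_sumr [in RHS]mulmx_suml [in RHS]scaler_sumr; apply: eq_bigr => c _.
  rewrite [in RHS]mulmx_sumr [in RHS]mulmx_suml [in RHS]scaler_sumr; apply: eq_bigr => e _.
  by rewrite -scalemxAr -scalemxAl scalerA !mulmxA.
transitivity (\sum_a \sum_b (eps j * del i a b) *: (r a *m rS M b)).
  apply: eq_bigr => a _; apply: eq_bigr => b _.
  by rewrite antiR -scalemxAr -scalemxAl mulmx1 scalerA mulrC.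
rewrite -scale_sum2 antiR scalerA mulrC.
done.
Qed.

Lemma S_anti i j : \sum_l mu i j l *: rS M l = rS M j *m rS M i.
Proof.
exact: (@conv_inv_uniq k _ (mdim M) Dp epp coassDp counitLp counitRp Lf mf Rf (i, j) convLm convmR).
Qed.

End Antipode.

Section Dual.
Variables (k : fieldType) (H : hopf_data k) (HH : is_hopf H).

Lemma trmxZ' m n (a : k) (A : 'M[k]_(m, n)) : (a *: A)^T = a *: A^T.
Proof. by apply/matrixP => i j; rewrite !mxE. Qed.

Lemma dual_module (M : fdmod H) : is_module M -> is_module (dual M).
Proof.
move=> HM; split.
  move=> i j /=; rewrite -trmx_mul -(S_anti HH HM).
  by apply/matrixP => a b; rewrite !mxE !summxE; apply: eq_bigr => l _; rewrite !mxE.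
rewrite /= -trmx1 -(rS_unit HH HM).
by apply/matrixP => a b; rewrite !mxE !summxE; apply: eq_bigr => l _; rewrite !mxE.
Qed.

Lemma tpow_module (M : fdmod H) n : is_module M -> (0 < n)%N -> is_module (tpow M n).
Proof.
move=> HM; elim: n => [//|n IH] _.
case: n IH => [|n] IH; first exact: HM.
exact: (tens_module HH (IH isT) HM).
Qed.
End Dual.

Section Idx.
Variable k : fieldType.
Lemma sum_idx (V : nmodType) m n (F : 'I_(m * n) -> V) :
  \sum_c F c = \sum_i \sum_j F (@mxtens_index m n (i, j)).
Proof.
rewrite (reindex (@mxtens_index m n)) /=; last first.
  by exists (@mxtens_unindex m n) => x _; [rewrite mxtens_indexK | rewrite mxtens_unindexK].
by rewrite pair_bigA; apply: eq_bigr => -[i j].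
Qed.

Lemma sum_eqr n (f : 'I_n -> k) j : \sum_j' f j' * (j' == j)%:R = f j.
Proof.
rewrite (bigD1 j) //= eqxx mulr1 big1 ?addr0 // => j' /negbTE ->.
by rewrite mulr0.
Qed.

Lemma sum_eql (V : lmodType k) n (F : 'I_n -> V) l : \sum_i (l == i)%:R *: F i = F l.
Proof.
rewrite (bigD1 l) //= eqxx scale1r big1 ?addr0 // => i /negbTE.
by rewrite eq_sym => ->; rewrite scale0r.
Qed.

Definition colfam h m d (C : 'I_h -> 'M[k]_(m, d)) : 'M[k]_(m, h * d) :=
  \matrix_(r, c) C (mxtens_unindex c).1 r (mxtens_unindex c).2.

Lemma colfam_ext h m d (C C' : 'I_h -> 'M[k]_(m, d)) :
  (forall i, C i = C' i) -> colfam C = colfam C'.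
Proof. by move=> e; apply/matrixP => r c; rewrite !mxE e. Qed.

Lemma colfam_mulL h m m' d (X : 'M[k]_(m', m)) (C : 'I_h -> 'M[k]_(m, d)) :
  X *m colfam C = colfam (fun i => X *m C i).
Proof. by apply/matrixP => r c; rewrite !mxE; apply: eq_bigr => x _; rewrite !mxE. Qed.

Lemma colfam_mulR h m d (C : 'I_h -> 'M[k]_(m, d)) (L : 'M[k]_h) :
  colfam C *m (L *t 1%:M) = colfam (fun i => \sum_i' L i' i *: C i').
Proof.
apply/matrixP => r c; case: (mxtens_indexP c) => i j.
rewrite !mxE sum_idx summxE mxtens_indexK /=.
apply: eq_bigr => i' _; rewrite (bigD1 j) //= big1 ?addr0; last first.
  by move=> j' /negbTE nj; rewrite tensmxE [1%:M j' j]mxE nj mulr0 mulr0.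
by rewrite tensmxE !mxE mxtens_indexK eqxx mulr1 mulrC.
Qed.
End Idx.

Section Free.
Variables (k : fieldType) (H : hopf_data k) (HH : is_hopf H).
Local Notation h := (hdim H).
Local Notation mu := (hmu H).
Local Notation u := (hunit H).
Local Notation del := (hdelta H).
Local Notation eps := (heps H).
Local Notation S := (hS H).

Definition Lreg l : 'M[k]_h := \matrix_(a, b) mu l b a.
Definition Areg := @FDMod k H h Lreg.
Definition Tr d := @FDMod k H d (fun l => (eps l)%:M).
Definition Free d := tens Areg (Tr d).

Lemma Areg_module : is_module Areg.
Proof.
split.
  move=> i j /=; apply/matrixP => a b; rewrite !mxE summxE.
  under eq_bigr do rewrite !mxE.
  under [RHS]eq_bigr do rewrite !mxE.
  by rewrite (ax_assoc HH); apply: eq_bigr => l _; rewrite mulrC.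
apply/matrixP => a b; rewrite !mxE summxE.
under eq_bigr do rewrite !mxE.
by rewrite (ax_unitl HH) eq_sym.
Qed.

Lemma Tr_module d : is_module (Tr d).
Proof.
split.
  move=> i j /=; rewrite -scalar_mxM -(ax_epsmul HH) raddf_sum.
  by apply: eq_bigr => l _; rewrite scale_scalar_mx.
rewrite /=; transitivity ((\sum_l u l * eps l)%:M : 'M[k]_d); last by rewrite (ax_epsunit HH).
by rewrite raddf_sum; apply: eq_bigr => l _; rewrite scale_scalar_mx.
Qed.

Lemma Free_module d : is_module (Free d).
Proof. exact: (tens_module HH Areg_module (Tr_module d)). Qed.

Lemma actFree d l : mact (Free d) l = Lreg l *t 1%:M.
Proof.
rewrite /=.
transitivity (\sum_i (\sum_j del l i j * eps j) *: (Lreg i *t (1%:M : 'M[k]_d))).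
  apply: eq_bigr => i _; rewrite scaler_suml; apply: eq_bigr => j _.
  by rewrite -[(eps j)%:M]scalemx1 tensmxZr scalerA.
under eq_bigr do rewrite (ax_counitr HH).
exact: sum_eql.
Qed.

Definition vunit d : 'M[k]_(h * d, d) :=
  \matrix_(c, j) (u (mxtens_unindex c).1 * ((mxtens_unindex c).2 == j)%:R).

Lemma colfam_vunit m d (C : 'I_h -> 'M[k]_(m, d)) : colfam C *m vunit d = \sum_i u i *: C i.
Proof.
apply/matrixP => r j; rewrite !mxE sum_idx summxE; apply: eq_bigr => i _.
rewrite mxE; under eq_bigr do rewrite !mxE mxtens_indexK /= mulrCA.
by rewrite -mulr_sumr sum_eqr.
Qed.

Lemma colfam_Lv d : colfam (fun i => (Lreg i *t 1%:M) *m vunit d) = 1%:M.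
Proof.
rewrite -tens11; apply/matrixP => a c.
case: (mxtens_indexP a) => a1 a2; case: (mxtens_indexP c) => i j.
rewrite tensmxE !mxE mxtens_indexK /= sum_idx.
transitivity (\sum_i' (u i' * mu i i' a1) * (a2 == j)%:R).
  apply: eq_bigr => i' _.
  under eq_bigr do rewrite tensmxE !mxE mxtens_indexK /= !mulrA.
  by rewrite sum_eqr mulrAC (mulrC (mu i i' a1)).
by rewrite -mulr_suml (ax_unitr HH) eq_sym.
Qed.

Lemma summand_Free (P : fdmod H) : is_module P -> projective P -> summand P (Free (mdim P)).
Proof.
move=> HP pP.
pose Phi := colfam (mact P) : 'M[k]_(mdim P, mdim (Free (mdim P))).
have hPhi : @is_hom k H (Free (mdim P)) P Phi.
  move=> l; rewrite actFree colfam_mulR colfam_mulL; apply: colfam_ext => i.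
  case: HP => mP _; rewrite mP; apply: eq_bigr => i' _; by rewrite !mxE.
have Phis : Phi *m vunit (mdim P) = 1%:M by rewrite colfam_vunit; case: HP.
have rPhi : \rank Phi = mdim P by apply/eqP; apply/row_freeP; exists (vunit (mdim P)).
have [G [hG PG]] := pP _ (Free_module (mdim P)) Phi hPhi rPhi.
by exists G, Phi.
Qed.

Lemma Free_proj d : projective (Free d).
Proof.
move=> N HN F hF rF.
have /row_freeP [s0 Fs] : row_free F by rewrite /row_free rF.
pose T := s0 *m vunit d.
exists (colfam (fun i => mact N i *m T)); split.
  move=> l; rewrite actFree colfam_mulR colfam_mulL; apply: colfam_ext => i.
  case: HN => mN _; rewrite mulmxA mN mulmx_suml; apply: eq_bigr => i' _.
  by rewrite mxE scalemxAl.
rewrite colfam_mulL -colfam_Lv; apply: colfam_ext => i.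
by rewrite /T !mulmxA hF actFree -!mulmxA (mulmxA F) Fs mul1mx.
Qed.

End Free.
Arguments Lreg {k H} l.
Arguments Areg {k H}.
Arguments Tr {k H} d.
Arguments Free {k H} d.
Arguments vunit {k H} d.

Section Blk.
Variables (k : fieldType) (h d : nat).
Definition blk (B : 'I_h -> 'I_h -> 'M[k]_d) : 'M[k]_(h * d) :=
  \sum_i \sum_l (delta_mx i l *t B i l).

Lemma blk_ext B C : (forall i l, B i l = C i l) -> blk B = blk C.
Proof. by move=> e; apply: eq_bigr => i _; apply: eq_bigr => l _; rewrite e. Qed.

Lemma blk_mul B C : blk B *m blk C = blk (fun i l' => \sum_l B i l *m C l l').
Proof.
rewrite /blk mulmx_suml; apply: eq_bigr => i _.
rewrite mulmx_suml.
transitivity (\sum_l \sum_l' delta_mx i l' *t (B i l *m C l l')).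
  apply: eq_bigr => l _; rewrite mulmx_sumr.
  transitivity (\sum_i' \sum_l' ((l == i')%:R *: (delta_mx i l' *t (B i l *m C i' l')))).
    apply: eq_bigr => i' _; rewrite mulmx_sumr; apply: eq_bigr => l' _.
    by rewrite tensmx_mul mul_delta_mx_cond -scaler_nat tensmxZl.
  rewrite exchange_big; apply: eq_bigr => l' _.
  exact: (sum_eql (fun i' => delta_mx i l' *t (B i l *m C i' l'))).
rewrite exchange_big; apply: eq_bigr => l' _.
by rewrite tensmx_sumr.
Qed.

Lemma blk_tens (A : 'M[k]_h) (B : 'M[k]_d) : A *t B = blk (fun i l => A i l *: B).
Proof.
rewrite {1}(matrix_sum_delta A) tensmx_suml; apply: eq_bigr => i _.
rewrite tensmx_suml; apply: eq_bigr => l _.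
by rewrite tensmxZl tensmxZr.
Qed.

Lemma blk_sum (I : finType) (B : I -> 'I_h -> 'I_h -> 'M[k]_d) :
  \sum_x blk (B x) = blk (fun i l => \sum_x B x i l).
Proof.
rewrite /blk; rewrite exchange_big; apply: eq_bigr => i _.
rewrite exchange_big; apply: eq_bigr => l _.
by rewrite tensmx_sumr.
Qed.

Lemma blk_scale c B : c *: blk B = blk (fun i l => c *: B i l).
Proof.
rewrite /blk scaler_sumr; apply: eq_bigr => i _.
rewrite scaler_sumr; apply: eq_bigr => l _.
by rewrite tensmxZr.
Qed.

Lemma blk1 : (1%:M : 'M[k]_(h * d)) = blk (fun i l => (i == l)%:R *: 1%:M).
Proof. by rewrite -tens11 blk_tens; apply: blk_ext => i l; rewrite mxE. Qed.
End Blk.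

Section Psi.
Variables (k : fieldType) (H : hopf_data k) (HH : is_hopf H).
Local Notation h := (hdim H).
Local Notation mu := (hmu H).
Local Notation u := (hunit H).
Local Notation del := (hdelta H).
Local Notation eps := (heps H).
Local Notation S := (hS H).
Variable Z : fdmod H.
Hypothesis HZ : is_module Z.
Local Notation z := (mact Z).

Definition Psic l i := \sum_w del l i w *: z w.
Definition Phic l i := \sum_w del l i w *: rS Z w.
Definition Psi : 'M[k]_(h * mdim Z) := blk (fun i l => Psic l i).
Definition Phi : 'M[k]_(h * mdim Z) := blk (fun i l => Phic l i).

Lemma PsiPhi : Psi *m Phi = 1%:M.
Proof.
rewrite blk_mul blk1; apply: blk_ext => i l'.
rewrite /Psic /Phic.
transitivity (\sum_l \sum_j \sum_j' (del l i j * del l' l j') *: (z j *m rS Z j')).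
  by apply: eq_bigr => l _; rewrite sum_mul2.
rewrite pull1.
transitivity (\sum_j \sum_j' \sum_m (del l' i m * del m j j') *: (z j *m rS Z j')).
  apply: eq_bigr => j _; apply: eq_bigr => j' _.
  by rewrite -!scaler_suml -(ax_coassoc HH); congr (_ *: _); apply: eq_bigr => ? _; rewrite mulrC.
rewrite -pull1.
transitivity (\sum_m del l' i m *: (eps m *: (1%:M : 'M[k]_(mdim Z)))).
  by apply: eq_bigr => m _; rewrite -(antiR HH HZ) scale_sum2.
transitivity (\sum_m (del l' i m * eps m) *: (1%:M : 'M[k]_(mdim Z))).
  by apply: eq_bigr => m _; rewrite scalerA.
by rewrite -scaler_suml (ax_counitr HH) eq_sym.
Qed.

Lemma Psi_hom : @is_hom k H (Free (mdim Z)) (tens Areg Z) Psi.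
Proof.
move=> b; rewrite (actFree HH) blk_tens /Psi blk_mul /=.
transitivity (blk (fun c l => \sum_x \sum_y del b x y *: (Lreg x c l *: z y)) *m
              blk (fun i l => Psic l i)); last first.
  congr (_ *m _); rewrite -blk_sum; apply: eq_bigr => x _.
  rewrite -blk_sum; apply: eq_bigr => y _.
  by rewrite blk_tens blk_scale.
rewrite blk_mul; apply: blk_ext => i a.
transitivity (\sum_w (\sum_x \sum_y \sum_c \sum_d
     del b x y * del a c d * mu x c i * mu y d w) *: z w).
  transitivity (\sum_l \sum_w (mu b a l * del l i w) *: z w).
    apply: eq_bigr => l _; rewrite mxE -scalemxAr mulmx1 /Psic.
    by rewrite scale_sum1.
  rewrite exchange_big; apply: eq_bigr => w _.
  by rewrite -scaler_suml (ax_delmul HH).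
symmetry.
transitivity (\sum_l \sum_x \sum_y \sum_d \sum_w
     (del b x y * mu x l i * del a l d * mu y d w) *: z w).
  apply: eq_bigr => l _.
  rewrite /Psic mulmx_suml; apply: eq_bigr => x _.
  rewrite mulmx_suml; apply: eq_bigr => y _.
  rewrite mxE scalerA -scalemxAl mulmx_sumr scaler_sumr; apply: eq_bigr => d _.
  rewrite -scalemxAr scalerA.
  case: HZ => mZ _; rewrite mZ scale_sum1; by apply: eq_bigr => w _.
rewrite pullS4; apply: eq_bigr => w _.
rewrite pull1 scaler_suml4.
apply: eq_bigr => x _; apply: eq_bigr => y _; apply: eq_bigr => c _; apply: eq_bigr => d _.
congr (_ *: _); ring.
Qed.

Lemma summand_Psi : summand (tens Areg Z) (Free (mdim Z)).
Proof.
have PP := PsiPhi.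
have PP' : Phi *m Psi = 1%:M by apply: mulmx1C.
exists Phi, Psi; split => //; last exact: Psi_hom.
move=> b.
have hP := Psi_hom b.
rewrite -[LHS]mulmx1 -PP mulmxA -(mulmxA Phi) -hP.
by rewrite mulmxA PP' mul1mx.
Qed.

End Psi.

Section TensProj.
Variables (k : fieldType) (H : hopf_data k) (HH : is_hopf H).

Lemma tens_proj (P X : fdmod H) : is_module P -> is_module X -> projective P ->
  projective (tens P X).
Proof.
move=> HP HX pP.
have s1 := summand_Free HH HP pP.
have s2 : summand (tens P X) (tens (Free (mdim P)) X) := summand_tensr X s1.
have s3 : summand (tens (Free (mdim P)) X) (tens Areg (tens (Tr (mdim P)) X)) :=
  summand_assoc1 HH Areg (Tr (mdim P)) X.
have s4 := summand_Psi HH (tens_module HH (Tr_module HH (mdim P)) HX).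
have pF : projective (Free (mdim (tens (Tr (mdim P)) X))) := @Free_proj _ _ HH _.
exact: (proj_summand (Free_module HH _) (summand_trans s2 (summand_trans s3 s4)) pF).
Qed.
End TensProj.

Section VecTools.
Variable k : fieldType.

Lemma sum_eqlr n (f : 'I_n -> k) i : \sum_j (i == j)%:R * f j = f i.
Proof.
rewrite (bigD1 i) //= eqxx mul1r big1 ?addr0 // => j.
by rewrite eq_sym => /negbTE ->; rewrite mul0r.
Qed.

Definition vecm n m (X : 'M[k]_(n, m)) : 'cV[k]_(n * m) :=
  \matrix_(c, j) X (mxtens_unindex c).1 (mxtens_unindex c).2.
Definition cvt n d (v : 'cV[k]_n) : 'M[k]_(n * d, d) :=
  \matrix_(c, j) (v (mxtens_unindex c).1 0 * ((mxtens_unindex c).2 == j)%:R).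
Definition rvt d n (w : 'rV[k]_n) : 'M[k]_(d, d * n) :=
  \matrix_(a, c) (((mxtens_unindex c).1 == a)%:R * w 0 (mxtens_unindex c).2).

Lemma tens_vec n m p q (A : 'M[k]_(p, n)) (B : 'M[k]_(q, m)) (X : 'M[k]_(n, m)) :
  (A *t B) *m vecm X = vecm (A *m X *m B^T).
Proof.
apply/matrixP => c j; case: (mxtens_indexP c) => a b.
rewrite !mxE sum_idx mxtens_indexK /=.
under eq_bigr do under eq_bigr do rewrite tensmxE !mxE mxtens_indexK /=.
rewrite exchange_big; apply: eq_bigr => b' _; rewrite !mxE mulr_suml.
by apply: eq_bigr => a' _; rewrite ?mxE; ring.
Qed.

Lemma vecm_sum n m (I : finType) (F : I -> 'M[k]_(n, m)) :
  vecm (\sum_i F i) = \sum_i vecm (F i).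
Proof. by apply/matrixP => c j; rewrite !mxE !summxE; apply: eq_bigr => i _; rewrite mxE. Qed.
Lemma vecmZ n m a (X : 'M[k]_(n, m)) : vecm (a *: X) = a *: vecm X.
Proof. by apply/matrixP => c j; rewrite !mxE. Qed.

Lemma cvt_mul n d (A : 'M[k]_n) (B : 'M[k]_d) (v : 'cV[k]_n) :
  (A *t B) *m cvt d v = cvt d (A *m v) *m B.
Proof.
apply/matrixP => c m; case: (mxtens_indexP c) => a b.
rewrite [LHS]mxE sum_idx.
transitivity (\sum_a' (A a a' * v a' 0) * B b m).
  apply: eq_bigr => a' _.
  transitivity (\sum_b' (A a a' * v a' 0 * B b b') * (b' == m)%:R).
    by apply: eq_bigr => b' _; rewrite tensmxE !mxE mxtens_indexK /=; ring.
  by rewrite sum_eqr.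
rewrite [RHS]mxE.
transitivity (\sum_m' (b == m')%:R * ((A *m v) a 0 * B m' m)).
  by rewrite sum_eqlr mxE mulr_suml.
by apply: eq_bigr => m' _; rewrite !mxE mxtens_indexK /=; ring.
Qed.

Lemma cvtZ n d a (v : 'cV[k]_n) : cvt d (a *: v) = a *: cvt d v.
Proof. by apply/matrixP => c j; rewrite !mxE mulrA. Qed.

Lemma rvt_mul d n (A : 'M[k]_d) (B : 'M[k]_n) (w : 'rV[k]_n) :
  rvt d w *m (A *t B) = A *m rvt d (w *m B).
Proof.
apply/matrixP => a c; case: (mxtens_indexP c) => a' b'.
rewrite [LHS]mxE sum_idx.
transitivity (A a a' * (w *m B) 0 b').
  transitivity (\sum_x (a == x)%:R * (A x a' * (w *m B) 0 b')); last by rewrite sum_eqlr.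
  apply: eq_bigr => x _; rewrite [(w *m B) 0 b']mxE !mulr_sumr; apply: eq_bigr => y _.
  by rewrite tensmxE !mxE mxtens_indexK /= (eq_sym x a); ring.
rewrite [RHS]mxE.
transitivity (\sum_x (a' == x)%:R * (A a x * (w *m B) 0 b')); first by rewrite sum_eqlr.
by apply: eq_bigr => x _; rewrite [rvt _ _ _ _]mxE mxtens_indexK /=; ring.
Qed.

Lemma rvtZ d n a (w : 'rV[k]_n) : rvt d (a *: w) = a *: rvt d w.
Proof. by apply/matrixP => c j; rewrite !mxE mulrCA. Qed.

Lemma idxA m1 m2 m3 (i1 : 'I_m1) (i2 : 'I_m2) (i3 : 'I_m3) :
  cast_ord (esym (mulnA m1 m2 m3)) (mxtens_index (mxtens_index (i1, i2), i3))
  = mxtens_index (i1, mxtens_index (i2, i3)).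
Proof. by apply: val_inj => /=; rewrite mulnDl -mulnA addnA. Qed.

Lemma mul_cmx' m a b (e : a = b) (X : 'M[k]_(m, a)) : X *m cmx' e = castmx (erefl m, e) X.
Proof. by case: b / e; rewrite /cmx' !castmx_id mulmx1. Qed.

End VecTools.

Section Snake.
Variables (k : fieldType) (H : hopf_data k) (HH : is_hopf H).
Local Notation h := (hdim H).
Local Notation mu := (hmu H).
Local Notation u := (hunit H).
Local Notation del := (hdelta H).
Local Notation eps := (heps H).
Local Notation S := (hS H).

Lemma assoc_hom (M N L : fdmod H) :
  @is_hom k H (tens (tens M N) L) (tens M (tens N L)) (cmx' (mulnA (mdim M) (mdim N) (mdim L))).
Proof. by move=> l; rewrite (actA HH) cmx'_conj2. Qed.

Lemma vec_tensT n m p q (A : 'M[k]_(n, p)) (B : 'M[k]_(m, q)) (X : 'M[k]_(n, m)) :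
  (vecm X)^T *m (A *t B) = (vecm (A^T *m X *m B))^T.
Proof. by rewrite -[LHS]trmxK trmx_mul trmxK trmx_tens tens_vec trmxK. Qed.

Lemma trmx_sum m n (I : finType) (F : I -> 'M[k]_(m, n)) : (\sum_i F i)^T = \sum_i (F i)^T.
Proof. by apply/matrixP => a b; rewrite !mxE !summxE; apply: eq_bigr => i _; rewrite mxE. Qed.

Variable M : fdmod H.
Hypothesis HM : is_module M.
Local Notation d := (mdim M).
Local Notation r := (mact M).
Definition v1 : 'cV[k]_(d * d) := vecm (1%:M : 'M[k]_d).

Lemma coev_hom i : mact (tens M (dual M)) i *m v1 = eps i *: v1.
Proof.
transitivity (\sum_x \sum_y del i x y *: vecm (r x *m rS M y)).
  rewrite /= mulmx_suml; apply: eq_bigr => x _; rewrite mulmx_suml; apply: eq_bigr => y _.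
  by rewrite -scalemxAl tens_vec trmxK mulmx1.
rewrite /v1 -vecmZ -(antiR HH HM) vecm_sum; apply: eq_bigr => x _.
by rewrite vecm_sum; apply: eq_bigr => y _; rewrite vecmZ.
Qed.

Lemma ev_hom j : v1^T *m mact (tens (dual M) M) j = eps j *: v1^T.
Proof.
transitivity (\sum_y \sum_z del j y z *: (vecm (rS M y *m r z))^T).
  rewrite /= mulmx_sumr; apply: eq_bigr => y _; rewrite mulmx_sumr; apply: eq_bigr => z _.
  by rewrite -scalemxAr vec_tensT trmxK mulmx1.
transitivity ((eps j *: v1)^T); last by rewrite trmxZ'.
rewrite /v1 -vecmZ -(antiL HH HM) vecm_sum trmx_sum; apply: eq_bigr => y _.
by rewrite vecm_sum trmx_sum; apply: eq_bigr => z _; rewrite vecmZ trmxZ'.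
Qed.

Local Notation dl x y := ((x == y)%:R : k).
Definition iota : 'M[k]_(d * d * d, d) := cvt d v1.
Definition piP : 'M[k]_(d, d * (d * d)) := rvt d v1^T.

Lemma iota_hom : @is_hom k H M (tens (tens M (dual M)) M) iota.
Proof.
move=> l; symmetry.
transitivity (\sum_i \sum_z (del l i z * eps i) *: (iota *m r z)).
  rewrite [mact _ l]/= mulmx_suml; apply: eq_bigr => i _.
  rewrite mulmx_suml; apply: eq_bigr => z _.
  by rewrite -scalemxAl /iota cvt_mul coev_hom cvtZ -scalemxAl scalerA.
rewrite exchange_big.
transitivity (\sum_z (l == z)%:R *: (iota *m r z)); last exact: sum_eql.
by apply: eq_bigr => z _; rewrite -scaler_suml (ax_counitl HH).
Qed.

Lemma piP_hom : @is_hom k H (tens M (tens (dual M) M)) M piP.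
Proof.
move=> l.
transitivity (\sum_x \sum_j (del l x j * eps j) *: (r x *m piP)).
  rewrite [mact _ l]/= mulmx_sumr; apply: eq_bigr => x _.
  rewrite mulmx_sumr; apply: eq_bigr => j _.
  by rewrite -scalemxAr /piP rvt_mul ev_hom rvtZ -scalemxAr scalerA.
transitivity (\sum_x (l == x)%:R *: (r x *m piP)); last exact: sum_eql.
by apply: eq_bigr => x _; rewrite -scaler_suml (ax_counitr HH).
Qed.

Lemma snake : summand M (tens (tens M (dual M)) M).
Proof.
exists iota, (piP *m cmx' (mulnA d d d)); split.
- exact: iota_hom.
- exact: (hom_mul piP_hom (assoc_hom M (dual M) M)).
rewrite mul_cmx'; apply/matrixP => a m.
rewrite [LHS]mxE sum_idx sum_idx.
transitivity (\sum_a1 \sum_f \sum_b ((dl a1 a) * (dl f b)) * ((dl a1 f) * (dl b m))).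
  apply: eq_bigr => a1 _; apply: eq_bigr => f _; apply: eq_bigr => b _.
  rewrite castmxE /= idxA /piP /iota /v1 !mxE !mxtens_indexK /=.
  by rewrite cast_ord_id.
transitivity (\sum_a1 (dl a1 a) * (dl a1 m)).
  apply: eq_bigr => a1 _.
  transitivity (\sum_f ((dl a1 a) * (dl a1 f)) * (dl f m)); last by rewrite sum_eqr; ring.
  apply: eq_bigr => f _.
  transitivity (\sum_b ((dl a1 a) * (dl f b) * (dl a1 f)) * (dl b m)).
    by apply: eq_bigr => b _; ring.
  by rewrite sum_eqr; ring.
rewrite (eq_bigr (fun a1 => (dl a a1) * (dl a1 m))); last by move=> a1 _; rewrite eq_sym.
by rewrite sum_eqlr mxE.
Qed.

End Snake.

Section Main.
Variables (k : fieldType) (H : hopf_data k) (HH : is_hopf H).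
Variable M : fdmod H.
Hypothesis HM : is_module M.
Hypothesis Hc : mod_iso (tens M (dual M)) (tens (dual M) M).
Local Notation D := (dual M).

Lemma fwd n : projective M -> projective (tpow M n.+1).
Proof.
move=> pM; elim: n => [//|n IH].
exact (tens_proj HH (@tpow_module _ _ HH M n.+1 HM isT) HM IH).
Qed.

Lemma step n : (0 < n)%N -> projective (tpow M n.+1) -> projective (tpow M n).
Proof.
move=> n0 pT.
have HD := dual_module HH HM.
have mT := @tpow_module _ _ HH M n.+1 HM isT.
have pT0 : projective (tens (tpow M n.+1) D) := tens_proj HH mT HD pT.
have mT0 : is_module (tens (tpow M n.+1) D) := tens_module HH mT HD.
apply: (proj_summand mT0 _ pT0).
have [_ iso2] := iso_summand Hc.
have sD : summand (tens M (tens D M)) (tens M (tens M D)) := summand_tensl M iso2.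
have key : summand M (tens (tens M M) D).
  apply: (summand_trans (snake HH HM)).
  apply: (summand_trans (summand_assoc1 HH M D M)).
  apply: (summand_trans sD).
  exact: summand_assoc2 HH M M D.
case: n n0 pT pT0 mT0 mT => [//|[|m]] _ pT pT0 mT0 mT; first exact: key.
set C := tpow M m.+1.
change (summand (tens C M) (tens (tens (tens C M) M) D)).
apply: (summand_trans (summand_tensl C key)).
apply: (summand_trans (summand_assoc2 HH C (tens M M) D)).
exact: (summand_tensr D (summand_assoc2 HH C M M)).
Qed.

Lemma bwd n : projective (tpow M n.+1) -> projective M.
Proof.
elim: n => [//|n IH] p; apply: IH.
exact (@step n.+1 isT p).
Qed.

End Main.

Unset Implicit Arguments.

Theorem theorem5p1 (k : fieldType) (H : hopf_data k) (HH : is_hopf H)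
  (n : nat) (hn : (0 < n)%N) (M : fdmod H) (HM : is_module M)
  (Hc : mod_iso (tens M (dual M)) (tens (dual M) M)) :
  projective M <-> projective (tpow M n).
Proof.
case: n hn => [//|n] _; split.
  exact: fwd.
exact: (bwd HH HM Hc).
Qed.
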